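(* Let $\beta<0$, $G_\beta(u)=-u^\beta$, $L\in\mathbb{N}$, $d>0$ and $u_0\in\mathcal{P}_{L,d}$. For $\delta>0$ let $u_{0,\delta}=u_0\vee\delta$ and let $u_\delta$ be a solution of $\partial_tu=\Delta G_\beta(u)$, $u(0)=u_{0,\delta}$, satisfying $\delta\le u_\delta\le\|u_{0,\delta}\|_\infty$. Then there exist $c=c(\beta,L,d)>0$ and $t^*=t^*(\beta,L,d)>0$ such that $u_\delta(t,k)\ge c\,t^{\frac1{1-\beta}}$ for all $0\le t\le t^*$ and $k\in\mathbb{Z}$.
   Context: $\Delta v(k)=v(k-1)-2v(k)+v(k+1)$. For $u\in\ell^\infty_+(\mathbb{Z})$, $\sigma_+(u,k,d)=\inf\{l>k:u(l)\ge d\}$ and $\mathcal{P}_{L,d}=\{u\in\ell^\infty_+(\mathbb{Z}):\sup_k(\sigma_+(u,k,d)-k)\le L\}$. A solution: $u\in C^0([0,\infty);\ell^\infty_+(\mathbb{Z}))$ with the given initial datum, each $u(\cdot,k)\in C^1((0,\infty);(0,\infty))$ satisfying the equation pointwise. (Such $u_\delta$ exist.) *)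

(* Defs.v *)
From Stdlib Require Import Reals ZArith.
From Coquelicot Require Import Coquelicot.
Open Scope R_scope.

Definition linf_plus (v : Z -> R) : Prop :=
  (forall k, 0 <= v k) /\ exists M, forall k, Rabs (v k) <= M.

Definition linf_norm (v : Z -> R) : R :=
  real (Lub_Rbar (fun x => exists k, x = Rabs (v k))).

Definition dlap (v : Z -> R) (k : Z) : R :=
  v (k - 1)%Z - 2 * v k + v (k + 1)%Z.

(* G_beta(u) = - u^beta  (used for u > 0) *)
Definition Gb (beta x : R) : R := - Rpower x beta.

(* sigma_+(u,k,d) = inf { l > k : u(l) >= d }  (in Rbar; +oo if empty) *)
Definition sigma_plus (u : Z -> R) (k : Z) (d : R) : Rbar :=
  Glb_Rbar (fun x => exists l : Z, (k < l)%Z /\ d <= u l /\ x = IZR l).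

Definition in_P (L : nat) (d : R) (u : Z -> R) : Prop :=
  linf_plus u /\
  forall k : Z, Rbar_le (Rbar_minus (sigma_plus u k d) (IZR k)) (INR L).

Definition is_solution (beta : R) (u0 : Z -> R) (u : R -> Z -> R) : Prop :=
  (forall t, 0 <= t -> linf_plus (u t)) /\
  (forall t, 0 <= t -> forall eps, 0 < eps -> exists eta, 0 < eta /\
     forall s, 0 <= s -> Rabs (s - t) < eta ->
       linf_norm (fun k => u s k - u t k) <= eps) /\
  (forall k, u 0 k = u0 k) /\
  (forall k t, 0 < t -> 0 < u t k) /\
  (forall k t, 0 < t -> ex_derive (fun s => u s k) t) /\
  (forall k t, 0 < t -> continuous (fun s => Derive (fun s' => u s' k) s) t) /\
  (forall k t, 0 < t ->
     is_derive (fun s => u s k) t (dlap (fun j => Gb beta (u t j)) k)).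

(* t^a for t >= 0, a > 0, with 0^a = 0 *)
Definition rpow0 (t a : R) : R := if Rle_dec t 0 then 0 else Rpower t a.

(* Main.v *)
Require Import Defs.
From Stdlib Require Import Reals Lra Lia ZArith ClassicalEpsilon.
From Coquelicot Require Import Coquelicot.
Open Scope R_scope.


Lemma ln_le_sub1 z : 0 < z -> ln z <= z - 1.
Proof. intros Hz. pose proof (exp_ineq1_le (ln z)). rewrite exp_ln in H; lra. Qed.

Lemma g_lip (beta m x y : R) : beta < 0 -> 0 < m -> m <= x <= y ->
  0 <= Rpower x beta - Rpower y beta <= (- beta) * Rpower m beta / m * (y - x).
Proof.
  intros hb hm [hx hy]. unfold Rpower.
  assert (hlx : ln m <= ln x) by (destruct (Req_dec m x); [subst; lra| apply Rlt_le, ln_increasing; lra]).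
  assert (hlxy : ln x <= ln y) by (destruct (Req_dec x y); [subst; lra| apply Rlt_le, ln_increasing; lra]).
  split.
  - assert (exp (beta * ln y) <= exp (beta * ln x)).
    { destruct (Req_dec (ln x) (ln y)) as [E|E]. rewrite E; lra. apply Rlt_le, exp_increasing; nra. }
    lra.
  - set (A := beta * ln x). set (B := beta * ln y).
    assert (HB : exp B >= exp A * (1 + (B - A))).
    { replace B with (A + (B - A)) at 1 by ring. rewrite exp_plus.
      pose proof (exp_ineq1_le (B - A)). pose proof (exp_pos A). nra. }
    assert (HAB : A - B <= - beta * ((y - x) / m)).
    { unfold A, B. assert (ln y - ln x <= (y - x) / m).
      { assert (ln y - ln x = ln (y / x)).
        { rewrite ln_div; lra. }
        rewrite H. eapply Rle_trans. apply ln_le_sub1. apply Rdiv_lt_0_compat; lra.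
        assert ((y - x)/ x <= (y - x) / m).
        { unfold Rdiv. apply Rmult_le_compat_l. lra. apply Rinv_le_contravar; lra. }
        replace (y / x - 1) with ((y - x)/x) by (field; lra). lra. }
      nra. }
    assert (HeA : exp A <= exp (beta * ln m)).
    { destruct (Req_dec (ln m) (ln x)) as [E|E]. unfold A; rewrite E; lra. apply Rlt_le, exp_increasing; unfold A; nra. }
    assert (0 <= A - B) by (unfold A, B; nra).
    pose proof (exp_pos A).
    assert (exp A - exp B <= exp A * (A - B)) by nra.
    assert (exp A * (A - B) <= exp (beta * ln m) * (- beta * ((y - x) / m))).
    { apply Rmult_le_compat; lra. }
    replace (- beta * exp (beta * ln m) / m * (y - x)) with (exp (beta * ln m) * (- beta * ((y - x) / m))) by (field; lra).
    lra.
Qed.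


Lemma key3 (g : R -> R) (Lam A u1 u2 u3 v1 v2 v3 : R) :
  0 <= Lam -> 0 <= A ->
  (forall x y, (x = u1 \/ x = u2 \/ x = u3 \/ x = v1 \/ x = v2 \/ x = v3) ->
               (y = u1 \/ y = u2 \/ y = u3 \/ y = v1 \/ y = v2 \/ y = v3) ->
     x <= y -> 0 <= g x - g y <= Lam * (y - x)) ->
  v1 - u1 <= A -> v2 - u2 <= A -> v3 - u3 <= A ->
  (g u1 - g v1) + (g u3 - g v3) - 2 * (g u2 - g v2) + 2 * Lam * (v2 - u2) <= 4 * Lam * A.
Proof.
  intros hL hA H h1 h2 h3.
  assert (n1 : g u1 - g v1 <= Lam * A).
  { destruct (Rle_dec u1 v1).
    - pose proof (H u1 v1 ltac:(tauto) ltac:(tauto) r). nra.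
    - pose proof (H v1 u1 ltac:(tauto) ltac:(tauto) ltac:(lra)). nra. }
  assert (n3 : g u3 - g v3 <= Lam * A).
  { destruct (Rle_dec u3 v3).
    - pose proof (H u3 v3 ltac:(tauto) ltac:(tauto) r). nra.
    - pose proof (H v3 u3 ltac:(tauto) ltac:(tauto) ltac:(lra)). nra. }
  assert (n2 : - 2 * (g u2 - g v2) + 2 * Lam * (v2 - u2) <= 2 * Lam * A).
  { destruct (Rle_dec u2 v2).
    - pose proof (H u2 v2 ltac:(tauto) ltac:(tauto) r). nra.
    - pose proof (H v2 u2 ltac:(tauto) ltac:(tauto) ltac:(lra)). nra. }
  lra.
Qed.

Lemma is_derive_Rminus (f g : R -> R) x df dg : is_derive f x df -> is_derive g x dg ->
  is_derive (fun t => f t - g t) x (df - dg).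
Proof. intros H1 H2. exact (is_derive_minus f g x df dg H1 H2). Qed.

Lemma ex_derive_cont_pt (f : R -> R) x : ex_derive f x -> continuity_pt f x.
Proof. intros H. apply continuity_pt_filterlim. exact (ex_derive_continuous f x H). Qed.

Lemma step (e : R -> R) (Lam A s0 s : R) (D : R -> R) :
  0 < Lam -> 0 <= A -> s0 < s ->
  (forall r, s0 <= r <= s -> continuity_pt e r) ->
  (forall r, s0 < r < s -> is_derive e r (D r) /\ D r + 2 * Lam * e r <= 4 * Lam * A) ->
  e s0 <= 0 ->
  e s <= 4 * Lam * A * (s - s0).
Proof.
  intros hL hA hs hc hd h0.
  set (K := 2 * Lam).
  set (h := fun r => e r * exp (K * (r - s0)) - 4 * Lam * A * (exp (K * (r - s0)) - 1) / K).
  set (df := fun r => Rmin 0 (Derive h r)).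
  assert (Hd : forall r, s0 < r < s -> is_derive h r (exp (K * (r - s0)) * (D r + K * e r - 4 * Lam * A))).
  { intros r hr. destruct (hd r hr) as [hd1 hd2].
    assert (HE : is_derive (fun r => exp (K * (r - s0))) r (K * exp (K * (r - s0)))).
    { auto_derive; [auto| rewrite Rmult_1_r; reflexivity]. }
    unfold h.
    replace (exp (K * (r - s0)) * (D r + K * e r - 4 * Lam * A)) with
      ((D r * exp (K * (r - s0)) + e r * (K * exp (K * (r - s0)))) -
        (4 * Lam * A * exp (K * (r - s0)))) by (unfold K; field; lra).
    apply is_derive_Rminus.
    - apply (is_derive_mult e (fun r => exp (K * (r - s0)))); auto.
      intros; apply Rmult_comm.
    - auto_derive. auto. match goal with |- ?a = ?b => change (@eq R a b) end. replace (r + - s0) with (r - s0) by ring. unfold K; field; lra. }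
  assert (Hdf : forall r, Rmin s0 s < r < Rmax s0 s -> is_derive h r (df r)).
  { intros r hr. rewrite Rmin_left in hr by lra. rewrite Rmax_right in hr by lra.
    pose proof (Hd r hr) as Hr.
    assert (exp (K * (r - s0)) * (D r + K * e r - 4 * Lam * A) <= 0).
    { destruct (hd r hr). pose proof (exp_pos (K * (r - s0))). unfold K in *. nra. }
    unfold df. rewrite (is_derive_unique _ _ _ Hr). rewrite Rmin_right by lra. auto. }
  assert (Hc : forall r, Rmin s0 s <= r <= Rmax s0 s -> continuity_pt h r).
  { intros r hr. rewrite Rmin_left in hr by lra. rewrite Rmax_right in hr by lra.
    unfold h. apply (continuity_pt_minus (fun r => e r * exp (K * (r - s0)))
       (fun r => 4 * Lam * A * (exp (K * (r - s0)) - 1) / K)).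
    apply (continuity_pt_mult e (fun r => exp (K * (r - s0)))). apply hc; auto.
    apply ex_derive_cont_pt. auto_derive. auto.
    apply ex_derive_cont_pt. auto_derive. auto. }
  destruct (MVT_gen h s0 s df Hdf Hc) as [c [hc1 hc2]].
  assert (df c <= 0) by (unfold df; apply Rmin_l).
  assert (Hh0 : h s0 = e s0).
  { unfold h. replace (s0 - s0) with 0 by ring. rewrite Rmult_0_r, exp_0. field. unfold K; lra. }
  assert (hs0 : 0 < s - s0) by lra.
  assert (Hhs : h s <= 0) by nra.
  unfold h in Hhs.
  set (x := K * (s - s0)) in *.
  assert (hx : 0 < x) by (unfold x, K; nra).
  pose proof (exp_ineq1_le (- x)). rewrite exp_Ropp in H0.
  pose proof (exp_pos x).
  assert (e s <= 4 * Lam * A * (1 - / exp x) / K).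
  { apply Rmult_le_reg_r with (exp x). lra.
    replace (4 * Lam * A * (1 - / exp x) / K * exp x) with (4 * Lam * A * (exp x - 1) / K) by (field; unfold K; lra).
    lra. }
  assert (4 * Lam * A * (1 - / exp x) / K <= 4 * Lam * A * x / K).
  { unfold Rdiv. apply Rmult_le_compat_r. unfold K; apply Rlt_le, Rinv_0_lt_compat; lra.
    apply Rmult_le_compat_l; nra. }
  replace (4 * Lam * A * x / K) with (4 * Lam * A * (s - s0)) in H3 by (unfold x; field; unfold K; lra).
  lra.
Qed.


Lemma pow2_ge n : INR n + 1 <= 2 ^ n.
Proof. induction n. simpl; lra. rewrite S_INR. simpl. pose proof (pos_INR n). lra. Qed.

Lemma le_halves x A0 : 0 <= A0 -> (forall i, x <= A0 / 2 ^ i) -> x <= 0.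
Proof.
  intros hA H. destruct (Rle_dec x 0) as [|hx]; auto. exfalso.
  assert (hx' : 0 < x) by lra.
  destruct (archimed (A0 / x)) as [H1 _].
  set (n := Z.to_nat (up (A0 / x))).
  assert (INR n >= A0 / x).
  { unfold n. destruct (Z_le_gt_dec 0 (up (A0/x))).
    rewrite INR_IZR_INZ, Z2Nat.id by auto. lra.
    assert (A0 / x >= 0) by (apply Rle_ge, Rdiv_le_0_compat; lra).
    assert (IZR (up (A0/x)) <= -1) by (apply IZR_le; lia). lra. }
  pose proof (H n). pose proof (pow2_ge n).
  assert (0 < 2 ^ n) by (apply pow_lt; lra).
  assert (x * 2 ^ n <= A0).
  { apply Rmult_le_reg_r with (/ 2 ^ n). apply Rinv_0_lt_compat; lra.
    rewrite Rmult_assoc, Rinv_r by lra. lra. }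
  assert (A0 / x * x = A0) by (field; lra).
  nra.
Qed.

Section Cmp.
Definition gpow (beta x : R) := Rpower x beta.

Lemma comparison (beta m Lam T A0 : R) (u v : R -> Z -> R) :
  0 < Lam -> 0 < T -> 0 <= A0 ->
  (forall x y, m <= x <= y -> 0 <= Rpower x beta - Rpower y beta <= Lam * (y - x)) ->
  (forall t k, 0 <= t <= T -> m <= u t k /\ m <= v t k /\ v t k - u t k <= A0) ->
  (forall k, v 0 k - u 0 k <= 0) ->
  (forall t k, 0 <= t <= T -> continuity_pt (fun s => v s k - u s k) t) ->
  (forall t k, 0 < t < T -> exists D, is_derive (fun s => v s k - u s k) t D /\
     D <= (Rpower (u t (k-1)%Z) beta - Rpower (v t (k-1)%Z) beta)
        + (Rpower (u t (k+1)%Z) beta - Rpower (v t (k+1)%Z) beta)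
        - 2 * (Rpower (u t k) beta - Rpower (v t k) beta)) ->
  forall t k, 0 <= t <= T -> v t k <= u t k.
Proof.
  intros hL hT hA0 hg hb h0 hc hd.
  set (e := fun s k => v s k - u s k).
  set (h := / (8 * Lam)).
  assert (hh : 0 < h) by (unfold h; apply Rinv_0_lt_compat; lra).
  assert (Inner : forall s0 s1, 0 <= s0 -> s0 < s1 -> s1 <= T -> s1 - s0 <= h ->
            (forall j, e s0 j <= 0) -> forall i j s, s0 <= s <= s1 -> e s j <= A0 / 2 ^ i).
  { intros s0 s1 hs0 hs01 hs1T hsh he0 i. induction i as [|i IH].
    - intros j s hs. simpl. unfold e. replace (A0 / 1) with A0 by field.
      apply hb; lra.
    - intros j s hs.
      assert (hpos : 0 < 2 ^ i) by (apply pow_lt; lra).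
      set (A := A0 / 2 ^ i) in *.
      assert (hA : 0 <= A) by (unfold A; apply Rdiv_le_0_compat; lra).
      replace (A0 / 2 ^ S i) with (A / 2) by (unfold A; simpl; field; lra).
      destruct (Req_dec s s0) as [E|E].
      { subst s. pose proof (he0 j). lra. }
      assert (Hs : e s j <= 4 * Lam * A * (s - s0)).
      { apply (step (fun r => e r j) Lam A s0 s (fun r => Derive (fun r => e r j) r)); auto; try lra.
        - intros r hr. apply hc; lra.
        - intros r hr. destruct (hd r j ltac:(lra)) as [D [HD1 HD2]].
          change (is_derive (fun s => e s j) r D) in HD1. replace (Derive (fun r0 : R => e r0 j) r) with D by (symmetry; apply is_derive_unique; exact HD1). split; auto.
          assert (HK := key3 (fun x => Rpower x beta) Lam A (u r (j-1)%Z) (u r j) (u r (j+1)%Z)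
                    (v r (j-1)%Z) (v r j) (v r (j+1)%Z) ltac:(lra) hA).
          cbv beta in HK.
          assert (forall jj, e r jj <= A) as HA.
          { intros jj. apply (IH jj r). lra. }
          unfold e in HA.
          assert (HK' : (Rpower (u r (j - 1)%Z) beta - Rpower (v r (j - 1)%Z) beta) +
                        (Rpower (u r (j + 1)%Z) beta - Rpower (v r (j + 1)%Z) beta) -
                        2 * (Rpower (u r j) beta - Rpower (v r j) beta) + 2 * Lam * (v r j - u r j) <= 4 * Lam * A).
          { apply HK; auto.
            intros x y Hx Hy Hxy. apply hg. split; auto.
            destruct Hx as [->|[->|[->|[->|[->| ->]]]]]; apply (hb r); lra. }
          unfold e. lra. }
      assert (4 * Lam * A * (s - s0) <= 4 * Lam * A * h).
      { apply Rmult_le_compat_l. nra. lra. }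
      assert (4 * Lam * A * h = A / 2) by (unfold h; field; lra).
      lra. }
  assert (Outer : forall n j s, 0 <= s <= Rmin (INR n * h) T -> e s j <= 0).
  { induction n as [|n IH].
    - intros j s hs. simpl in hs. rewrite Rmult_0_l, Rmin_left in hs by lra.
      replace s with 0 by lra. apply h0.
    - intros j s hs.
      destruct (Rle_dec s (Rmin (INR n * h) T)) as [Hle|Hgt].
      { apply IH; lra. }
      assert (hn0 : 0 <= INR n) by apply pos_INR.
      rewrite S_INR in hs.
      assert (hnT : INR n * h < T).
      { destruct (Rle_dec T (INR n * h)) as [r|r]; [|lra]. rewrite Rmin_right in Hgt by lra. pose proof (Rmin_r ((INR n + 1) * h) T). lra. }
      rewrite Rmin_left in Hgt by lra.
      set (s0 := INR n * h). set (s1 := Rmin ((INR n + 1) * h) T).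
      assert (hs1 : s0 < s1).
      { unfold s1, s0. apply Rmin_glb_lt; nra. }
      assert (E0 : forall j, e s0 j <= 0).
      { intros jj. apply IH. split. unfold s0; nra. unfold s0; rewrite Rmin_left by lra; lra. }
      apply (le_halves _ A0 hA0). intros i.
      apply (Inner s0 s1); auto.
      + unfold s0; nra.
      + unfold s1; apply Rmin_r.
      + unfold s1, s0. pose proof (Rmin_l ((INR n + 1) * h) T). nra.
      + unfold s1. split. fold s0 in Hgt. lra. lra. }
  intros t k ht.
  destruct (archimed (T / h)) as [H1 _].
  set (n := Z.to_nat (up (T / h))).
  assert (INR n >= T / h).
  { unfold n. destruct (Z_le_gt_dec 0 (up (T/h))).
    rewrite INR_IZR_INZ, Z2Nat.id by auto. lra.
    assert (T / h >= 0) by (apply Rle_ge, Rdiv_le_0_compat; lra).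
    assert (IZR (up (T/h)) <= -1) by (apply IZR_le; lia). lra. }
  assert (INR n * h >= T).
  { assert (T / h * h = T) by (field; lra). nra. }
  pose proof (Outer n k t). unfold e in H2. apply Rminus_le. apply H2.
  rewrite Rmin_right by lra. lra.
Qed.
End Cmp.


Lemma linf_ge (x : Z -> R) (M : R) k : (forall j, Rabs (x j) <= M) -> Rabs (x k) <= linf_norm x.
Proof.
  intros HM. unfold linf_norm.
  destruct (Lub_Rbar_correct (fun y => exists j, y = Rabs (x j))) as [Hub Hl].
  assert (H1 : Rbar_le (Rabs (x k)) (Lub_Rbar (fun y => exists j, y = Rabs (x j)))).
  { apply Hub. exists k; auto. }
  assert (H2 : Rbar_le (Lub_Rbar (fun y => exists j, y = Rabs (x j))) M).
  { apply Hl. intros y [j ->]. simpl. apply HM. }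
  destruct (Lub_Rbar (fun y => exists j, y = Rabs (x j))); simpl in *; tauto.
Qed.

Lemma next_big (L : nat) (d : R) (u0 : Z -> R) : in_P L d u0 ->
  forall k, exists i : nat, (1 <= i <= L)%nat /\ d <= u0 (k + Z.of_nat i)%Z.
Proof.
  intros [_ HP] k. apply NNPP. intros Hn.
  assert (Hall : forall l : Z, (k < l)%Z -> d <= u0 l -> (k + Z.of_nat L + 1 <= l)%Z).
  { intros l hl hd. destruct (Z_le_gt_dec (k + Z.of_nat L + 1) l); auto. exfalso. apply Hn.
    exists (Z.to_nat (l - k)). split. lia. replace (k + Z.of_nat (Z.to_nat (l - k)))%Z with l by lia. auto. }
  specialize (HP k). unfold sigma_plus in HP.
  destruct (Glb_Rbar_correct (fun x => exists l : Z, (k < l)%Z /\ d <= u0 l /\ x = IZR l)) as [_ Hg].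
  assert (Hb : Rbar_le (IZR (k + Z.of_nat L + 1)) (Glb_Rbar (fun x => exists l : Z, (k < l)%Z /\ d <= u0 l /\ x = IZR l))).
  { apply Hg. intros x [l [hl [hd ->]]]. simpl. apply IZR_le. apply Hall; auto. }
  destruct (Glb_Rbar (fun x => exists l : Z, (k < l)%Z /\ d <= u0 l /\ x = IZR l)); simpl in *; try tauto.
  rewrite !plus_IZR in Hb. rewrite <- INR_IZR_INZ in Hb. lra.
Qed.

Lemma min_nat (P : nat -> Prop) n : P n -> exists m, P m /\ (m <= n)%nat /\ forall j, (j < m)%nat -> ~ P j.
Proof.
  induction n as [n IH] using (well_founded_induction lt_wf). intros Hn.
  destruct (classic (exists j, (j < n)%nat /\ P j)) as [[j [hj Pj]]|Hno].
  - destruct (IH j hj Pj) as [m [Pm [hm Hmin]]]. exists m. split; auto. split; auto. lia.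
  - exists n. split; auto. split; auto. intros j hj Pj. apply Hno. eauto.
Qed.


Lemma rp_deriv tau a t : 0 < t + tau -> is_derive (fun s => Rpower (s + tau) a) t (a * Rpower (t+tau) (a-1)).
Proof.
  intros h.
  assert (H1 : is_derive (fun x => Rpower x a) (t+tau) (a*Rpower (t+tau)(a-1))) by (apply is_derive_Reals, derivable_pt_lim_power; lra).
  assert (H2 : is_derive (fun s => s + tau) t 1) by (auto_derive; auto; ring).
  pose proof (is_derive_comp _ _ _ _ _ H1 H2) as H. replace (a * Rpower (t + tau) (a - 1)) with (scal 1 (a * Rpower (t + tau) (a - 1))). exact H. unfold scal; simpl; unfold mult; simpl; ring.
Qed.

Lemma rp_pos x y : 0 < Rpower x y.
Proof. unfold Rpower; apply exp_pos. Qed.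

Lemma rp_mono_pos c x y : 0 <= c -> 0 < x <= y -> Rpower x c <= Rpower y c.
Proof. intros; apply Rle_Rpower_l; auto. Qed.

Lemma rp_mono_neg c x y : c <= 0 -> 0 < x <= y -> Rpower y c <= Rpower x c.
Proof.
  intros hc hxy. replace c with (- (- c)) by ring. rewrite (Rpower_Ropp y (-c)), (Rpower_Ropp x (-c)).
  apply Rinv_le_contravar. apply rp_pos. apply rp_mono_pos; lra.
Qed.

Lemma rp_inv x c : 0 < x -> c <> 0 -> Rpower (Rpower x c) (1/c) = x.
Proof. intros. rewrite Rpower_mult. replace (c * (1/c)) with 1 by (field; auto). apply Rpower_1; auto. Qed.

Lemma rp_inv' x c : 0 < x -> c <> 0 -> Rpower (Rpower x (1/c)) c = x.
Proof. intros. rewrite Rpower_mult. replace (1/c * c) with 1 by (field; auto). apply Rpower_1; auto. Qed.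

Lemma rp_one y : Rpower 1 y = 1.
Proof. unfold Rpower. rewrite ln_1, Rmult_0_r. apply exp_0. Qed.

Lemma min_uniq (P : nat -> Prop) m1 m2 :
  P m1 -> (forall j, (j < m1)%nat -> ~ P j) -> P m2 -> (forall j, (j < m2)%nat -> ~ P j) -> m1 = m2.
Proof.
  intros H1 M1 H2 M2. destruct (Nat.lt_total m1 m2) as [h|[h|h]]; auto.
  - exfalso; apply (M2 m1); auto.
  - exfalso; apply (M1 m2); auto.
Qed.


Theorem lemmaA10 :
  forall (beta : R) (L : nat) (d : R), beta < 0 -> 0 < d ->
  exists c tstar : R, 0 < c /\ 0 < tstar /\
    forall (u0 : Z -> R) (delta : R) (u : R -> Z -> R),
      in_P L d u0 -> 0 < delta ->
      is_solution beta (fun k => Rmax (u0 k) delta) u ->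
      (forall t k, 0 <= t ->
         delta <= u t k <= linf_norm (fun j => Rmax (u0 j) delta)) ->
      forall t k, 0 <= t <= tstar ->
        c * rpow0 t (1 / (1 - beta)) <= u t k.
Proof.
  intros beta L d hb hd.
  pose (a := 1 / (1 - beta)).
  assert (ha0 : 0 < a) by (unfold a; apply Rdiv_lt_0_compat; lra).
  assert (ha1 : a < 1).
  { unfold a. apply Rmult_lt_reg_r with (1 - beta). lra. unfold Rdiv. rewrite Rmult_assoc, Rinv_l by lra. lra. }
  assert (hab : a * beta = a - 1) by (unfold a; field; lra).
  pose (Lr := INR L + 1).
  assert (hLr : 1 <= Lr) by (unfold Lr; pose proof (pos_INR L); lra).
  pose (C' := 2 * (Lr * Lr) / a).
  assert (hC : 0 < C') by (unfold C'; apply Rdiv_lt_0_compat; nra).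
  assert (hCa : C' * a = 2 * (Lr * Lr)) by (unfold C'; field; lra).
  pose (X1 := Rpower (d / (4 * C')) (1 / a)).
  pose (X2 := Rpower (4 * Rpower (d / 4) beta) (1 / (a - 1))).
  pose (X := Rmin X1 X2).
  assert (hX : 0 < X) by (unfold X; apply Rmin_glb_lt; apply rp_pos).
  assert (hXa : Rpower X a <= d / (4 * C')).
  { replace (d / (4 * C')) with (Rpower X1 a).
    apply rp_mono_pos; [lra| split; auto; apply Rmin_l].
    unfold X1. apply rp_inv'. apply Rdiv_lt_0_compat; lra. lra. }
  assert (hXa1 : 4 * Rpower (d / 4) beta <= Rpower X (a - 1)).
  { replace (4 * Rpower (d / 4) beta) with (Rpower X2 (a - 1)).
    apply rp_mono_neg; [lra| split; auto; apply Rmin_r].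
    unfold X2. apply rp_inv'. pose proof (rp_pos (d/4) beta). lra. lra. }
  pose (T0 := X / 2).
  assert (hT0 : 0 < T0) by (unfold T0; lra).
  pose (c := Rmin (Rpower (Lr * Lr) (1 / beta)) (d / 4 / Rpower T0 a)).
  assert (hc : 0 < c).
  { unfold c. apply Rmin_glb_lt. apply rp_pos. apply Rdiv_lt_0_compat. lra. apply rp_pos. }
  exists c, T0. split; auto. split; auto.
  intros u0 delta u HP hdel Hsol Hbnd t k ht.
  unfold rpow0. destruct (Rle_dec t 0) as [ht0|ht0].
  { rewrite Rmult_0_r. pose proof (Hbnd t k ltac:(lra)). lra. }
  fold a.
  assert (HN := next_big L d u0 HP).
  pose (Pq := fun k i => (1 <= i)%nat /\ d <= u0 (k + Z.of_nat i)%Z).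
  pose (Pp := fun k i => (1 <= i)%nat /\ d <= u0 (k - Z.of_nat i)%Z).
  assert (HQ : forall k, exists i, (Pq k i /\ (i <= L)%nat) /\ forall j, (j < i)%nat -> ~ Pq k j).
  { intros k0. destruct (HN k0) as [i [hi hdi]].
    destruct (min_nat (Pq k0) i) as [m0 [Pm [hmi Hmin]]]. split; auto; lia.
    exists m0. split; auto. split; auto. lia. }
  assert (HPp : forall k, exists i, (Pp k i /\ (i <= L)%nat) /\ forall j, (j < i)%nat -> ~ Pp k j).
  { intros k0. destruct (HN (k0 - Z.of_nat L - 1)%Z) as [i [hi hdi]].
    assert (Pp k0 (L + 1 - i)%nat).
    { split. lia. replace (k0 - Z.of_nat (L + 1 - i))%Z with (k0 - Z.of_nat L - 1 + Z.of_nat i)%Z by lia. auto. }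
    destruct (min_nat (Pp k0) (L + 1 - i)%nat H) as [m0 [Pm [hmi Hmin]]].
    exists m0. split; auto. split; auto. lia. }
  pose (q := fun k => proj1_sig (constructive_indefinite_description _ (HQ k))).
  pose (p := fun k => proj1_sig (constructive_indefinite_description _ (HPp k))).
  assert (Hq : forall k, (Pq k (q k) /\ (q k <= L)%nat) /\ forall j, (j < q k)%nat -> ~ Pq k j).
  { intros k0. exact (proj2_sig (constructive_indefinite_description _ (HQ k0))). }
  assert (Hp : forall k, (Pp k (p k) /\ (p k <= L)%nat) /\ forall j, (j < p k)%nat -> ~ Pp k j).
  { intros k0. exact (proj2_sig (constructive_indefinite_description _ (HPp k0))). }
  clearbody p q.
  assert (Rp : forall k, ~ d <= u0 k -> p (k + 1)%Z = S (p k)).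
  { intros k0 hk0. destruct (Hp k0) as [[[hp1 hpd] hpL] hpm].
    destruct (Hp (k0+1)%Z) as [[Pk1 _] hpm1].
    symmetry. apply (min_uniq (Pp (k0 + 1)%Z)); auto.
    - split. lia. replace (k0 + 1 - Z.of_nat (S (p k0)))%Z with (k0 - Z.of_nat (p k0))%Z by lia. auto.
    - intros j hj [hj1 hjd]. destruct (Nat.eq_dec j 1) as [->|hne].
      + apply hk0. replace k0 with (k0 + 1 - Z.of_nat 1)%Z by lia. auto.
      + apply (hpm (j - 1)%nat). lia. split. lia.
        replace (k0 - Z.of_nat (j - 1))%Z with (k0 + 1 - Z.of_nat j)%Z by lia. auto. }
  assert (Rq : forall k, ~ d <= u0 k -> q (k - 1)%Z = S (q k)).
  { intros k0 hk0. destruct (Hq k0) as [[[hq1 hqd] hqL] hqm].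
    destruct (Hq (k0-1)%Z) as [[Qk1 _] hqm1].
    symmetry. apply (min_uniq (Pq (k0 - 1)%Z)); auto.
    - split. lia. replace (k0 - 1 + Z.of_nat (S (q k0)))%Z with (k0 + Z.of_nat (q k0))%Z by lia. auto.
    - intros j hj [hj1 hjd]. destruct (Nat.eq_dec j 1) as [->|hne].
      + apply hk0. replace k0 with (k0 - 1 + Z.of_nat 1)%Z by lia. auto.
      + apply (hqm (j - 1)%nat). lia. split. lia.
        replace (k0 + Z.of_nat (j - 1))%Z with (k0 - 1 + Z.of_nat j)%Z by lia. auto. }
  assert (Bp : forall k, d <= u0 (k - 1)%Z -> p k = 1%nat).
  { intros k0 hk0. destruct (Hp k0) as [[Pk _] hpm].
    symmetry. apply (min_uniq (Pp k0)); auto.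
    - split. lia. auto.
    - intros j hj [hj1 _]. lia. }
  assert (Bq : forall k, d <= u0 (k + 1)%Z -> q k = 1%nat).
  { intros k0 hk0. destruct (Hq k0) as [[Pk _] hqm].
    symmetry. apply (min_uniq (Pq k0)); auto.
    - split. lia. auto.
    - intros j hj [hj1 _]. lia. }
  pose (psi := fun k => INR (p k) * INR (q k)).
  assert (Hpb : forall k, 1 <= INR (p k) <= INR L).
  { intros k0. destruct (Hp k0) as [[[h1 _] h2] _]. split. apply (le_INR 1); auto. apply le_INR; auto. }
  assert (Hqb : forall k, 1 <= INR (q k) <= INR L).
  { intros k0. destruct (Hq k0) as [[[h1 _] h2] _]. split. apply (le_INR 1); auto. apply le_INR; auto. }
  assert (Hpsi : forall k, 1 <= psi k <= Lr * Lr).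
  { intros k0. unfold psi, Lr. pose proof (Hpb k0). pose proof (Hqb k0). split; nra. }
  pose (tau := Rmin T0 (Rpower delta (1 / a))).
  assert (htau : 0 < tau) by (unfold tau; apply Rmin_glb_lt; auto; apply rp_pos).
  assert (htauT : tau <= T0) by apply Rmin_l.
  assert (htaud : Rpower tau a <= delta).
  { eapply Rle_trans. apply rp_mono_pos with (y := Rpower delta (1/a)). lra. split; auto; apply Rmin_r.
    rewrite rp_inv'; lra. }
  pose (phi := fun k => Rpower (psi k) (1 / beta)).
  assert (hphi : forall k, Rpower (Lr * Lr) (1 / beta) <= phi k <= 1).
  { intros k0. unfold phi. pose proof (Hpsi k0). assert (1 / beta < 0).
    { unfold Rdiv. rewrite Rmult_1_l. apply Rinv_lt_0_compat; auto. }
    split. apply rp_mono_neg; lra. eapply Rle_trans. apply (rp_mono_neg (1/beta) 1 (psi k0)); lra. rewrite rp_one; lra. }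
  assert (hphi_g : forall k s, 0 < s -> Rpower (Rpower s a * phi k) beta = Rpower s (a - 1) * psi k).
  { intros k0 s hs. unfold phi. rewrite <- Rpower_mult_distr by apply rp_pos.
    rewrite !Rpower_mult. rewrite hab. replace (1 / beta * beta) with 1 by (field; lra).
    rewrite Rpower_1. auto. pose proof (Hpsi k0); lra. }
  pose (v := fun t k => if Rle_dec d (u0 k) then d / 2 - C' * Rpower (t + tau) a
                        else Rpower (t + tau) a * phi k).
  pose (ut := fun t k => u (Rmax 0 t) k).
  pose (m := Rmin (d / 4) (Rpower tau a * Rpower (Lr * Lr) (1 / beta))).
  assert (hm : 0 < m) by (unfold m; apply Rmin_glb_lt; [lra| apply Rmult_lt_0_compat; apply rp_pos]).
  assert (hmd : m <= delta).
  { unfold m. eapply Rle_trans. apply Rmin_r. pose proof (hphi k). pose proof (rp_pos tau a). nra. }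
  pose (Lam := (- beta) * Rpower m beta / m).
  assert (hLam : 0 < Lam).
  { unfold Lam. apply Rdiv_lt_0_compat; auto. pose proof (rp_pos m beta). nra. }
  pose (A0 := d / 2 + d / (4 * C')).
  assert (hA0 : 0 <= A0).
  { unfold A0. assert (0 < d / (4 * C')) by (apply Rdiv_lt_0_compat; lra). lra. }
  assert (Hsmall : forall t, 0 <= t <= T0 -> Rpower (t + tau) a <= d / (4 * C')).
  { intros t0 ht'. eapply Rle_trans; [|exact hXa]. apply rp_mono_pos. lra. unfold T0 in *. lra. }
  assert (HE4 : forall t, 0 <= t <= T0 -> 4 * Rpower (d / 4) beta <= Rpower (t + tau) (a - 1)).
  { intros t0 ht'. eapply Rle_trans; [exact hXa1|]. apply rp_mono_neg. lra. unfold T0 in *. lra. }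
  assert (Hvbig : forall t k, 0 <= t <= T0 -> d <= u0 k -> d / 4 <= v t k <= d / 2).
  { intros t0 k0 ht' hk0. unfold v. destruct (Rle_dec d (u0 k0)); [|tauto].
    pose proof (Hsmall t0 ht'). pose proof (rp_pos (t0 + tau) a).
    assert (C' * Rpower (t0 + tau) a <= d / 4).
    { replace (d / 4) with (C' * (d / (4 * C'))) by (field; lra). apply Rmult_le_compat_l; lra. }
    split; nra. }
  assert (Hvsm : forall t k, 0 <= t <= T0 -> ~ d <= u0 k -> v t k = Rpower (t + tau) a * phi k).
  { intros t0 k0 ht' hk0. unfold v. destruct (Rle_dec d (u0 k0)); tauto. }
  assert (Hvb : forall t k, 0 <= t <= T0 -> m <= v t k /\ v t k <= A0).
  { intros t0 k0 ht'. destruct (Rle_dec d (u0 k0)) as [hk0|hk0].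
    - pose proof (Hvbig t0 k0 ht' hk0). unfold m, A0. pose proof (Rmin_l (d/4) (Rpower tau a * Rpower (Lr * Lr) (1 / beta))).
      assert (0 < d / (4 * C')) by (apply Rdiv_lt_0_compat; lra). lra.
    - rewrite (Hvsm t0 k0 ht' hk0). pose proof (hphi k0). pose proof (Hsmall t0 ht').
      assert (Rpower tau a <= Rpower (t0 + tau) a) by (apply rp_mono_pos; lra).
      pose proof (rp_pos tau a). pose proof (rp_pos (Lr * Lr) (1 / beta)).
      assert (m <= Rpower tau a * Rpower (Lr * Lr) (1 / beta)) by apply Rmin_r.
      unfold A0. split. nra. nra. }
  destruct Hsol as [Hs1 [Hs2 [Hs3 [Hs4 [Hs5 [Hs6 Hs7]]]]]].
  assert (HG : forall x y, m <= x <= y -> 0 <= Rpower x beta - Rpower y beta <= Lam * (y - x)).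
  { intros x y hxy. unfold Lam. apply g_lip; auto. }
  assert (Hut : forall t k, 0 <= t -> ut t k = u t k).
  { intros t0 k0 h0. unfold ut. rewrite Rmax_right; auto. }
  assert (HB : forall t k, 0 <= t <= T0 -> m <= ut t k /\ m <= v t k /\ v t k - ut t k <= A0).
  { intros t0 k0 ht'. rewrite Hut by lra. pose proof (Hbnd t0 k0 ltac:(lra)). pose proof (Hvb t0 k0 ht').
    split. lra. split. lra. lra. }
  assert (H0 : forall k, v 0 k - ut 0 k <= 0).
  { intros k0. rewrite Hut by lra. rewrite Hs3.
    destruct (Rle_dec d (u0 k0)) as [hk0|hk0].
    - pose proof (Hvbig 0 k0 ltac:(lra) hk0). pose proof (Rmax_l (u0 k0) delta). lra.
    - rewrite (Hvsm 0 k0 ltac:(lra) hk0). rewrite Rplus_0_l. pose proof (hphi k0).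
      pose proof (rp_pos tau a). pose proof (Rmax_r (u0 k0) delta). nra. }
  assert (Hud : forall t k, 0 < t -> is_derive (fun s => ut s k) t (dlap (fun j => Gb beta (u t j)) k)).
  { intros t0 k0 h0. apply (is_derive_ext_loc (fun s => u s k0)).
    exists (mkposreal t0 h0). intros y Hy. unfold ball in Hy; simpl in Hy.
    unfold AbsRing_ball, abs, minus, plus, opp in Hy; simpl in Hy. apply Rabs_lt_between' in Hy.
    unfold ut. rewrite Rmax_right; auto. lra.
    apply Hs7; auto. }
  assert (Hvd_big : forall t k, 0 < t + tau -> d <= u0 k ->
            is_derive (fun s => v s k) t (- (C' * (a * Rpower (t + tau) (a - 1))))).
  { intros t0 k0 h0 hk0. apply (is_derive_ext (fun s => d / 2 - C' * Rpower (s + tau) a)).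
    { intros s0. unfold v. destruct (Rle_dec d (u0 k0)); tauto. }
    replace (- (C' * (a * Rpower (t0 + tau) (a - 1)))) with (0 - C' * (a * Rpower (t0 + tau) (a - 1))) by ring.
    apply is_derive_Rminus. apply (is_derive_const (d / 2)). apply is_derive_scal. apply rp_deriv; auto. }
  assert (Hvd_sm : forall t k, 0 < t + tau -> ~ d <= u0 k ->
            is_derive (fun s => v s k) t (phi k * (a * Rpower (t + tau) (a - 1)))).
  { intros t0 k0 h0 hk0. apply (is_derive_ext (fun s => phi k0 * Rpower (s + tau) a)).
    { intros s0. unfold v. destruct (Rle_dec d (u0 k0)); [tauto|]. apply Rmult_comm. }
    apply is_derive_scal. apply rp_deriv; auto. }
  assert (HC : forall t k, 0 <= t <= T0 -> continuity_pt (fun s => v s k - ut s k) t).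
  { intros t0 k0 ht'. apply (continuity_pt_minus (fun s => v s k0) (fun s => ut s k0)).
    - apply ex_derive_cont_pt. destruct (Rle_dec d (u0 k0)) as [hk0|hk0].
      + eexists. apply Hvd_big; auto; lra.
      + eexists. apply Hvd_sm; auto; lra.
    - destruct (Req_dec t0 0) as [E0|E0].
      + subst t0. unfold continuity_pt, continue_in, limit1_in, limit_in. intros eps heps.
        destruct (Hs2 0 (Rle_refl 0) (eps / 2) ltac:(lra)) as [eta [heta Heta]].
        exists eta. split; auto. intros x [_ hx]. simpl in *. unfold R_dist in *.
        unfold ut. rewrite (Rmax_left 0 0) by lra.
        assert (hs0 : 0 <= Rmax 0 x) by apply Rmax_l.
        assert (hsx : Rabs (Rmax 0 x - 0) < eta).
        { unfold Rmax. destruct (Rle_dec 0 x). auto. rewrite Rminus_0_r, Rabs_R0. auto. }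
        pose proof (Heta (Rmax 0 x) hs0 hsx) as Hn.
        destruct (Hs1 (Rmax 0 x) hs0) as [_ [M1 HM1]]. destruct (Hs1 0 (Rle_refl 0)) as [_ [M2 HM2]].
        assert (Hl := linf_ge (fun j => u (Rmax 0 x) j - u 0 j) (M1 + M2) k0).
        simpl in Hl. assert (Rabs (u (Rmax 0 x) k0 - u 0 k0) <= linf_norm (fun j => u (Rmax 0 x) j - u 0 j)).
        { apply Hl. intros j. pose proof (Rabs_triang (u (Rmax 0 x) j) (- u 0 j)). rewrite Rabs_Ropp in H.
          pose proof (HM1 j). pose proof (HM2 j). unfold Rminus. lra. }
        lra.
      + apply ex_derive_cont_pt. eexists. apply Hud. lra. }
  assert (HD : forall t k, 0 < t < T0 -> exists D, is_derive (fun s => v s k - ut s k) t D /\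
     D <= (Rpower (ut t (k-1)%Z) beta - Rpower (v t (k-1)%Z) beta)
        + (Rpower (ut t (k+1)%Z) beta - Rpower (v t (k+1)%Z) beta)
        - 2 * (Rpower (ut t k) beta - Rpower (v t k) beta)).
  { intros t0 k0 ht'.
    assert (ht'' : 0 <= t0 <= T0) by lra.
    rewrite !(Hut t0) by lra.
    pose (E := Rpower (t0 + tau) (a - 1)).
    assert (hE : 0 < E) by apply rp_pos.
    assert (gnb : forall j, ~ d <= u0 j -> Rpower (v t0 j) beta = E * psi j).
    { intros j hj. rewrite (Hvsm t0 j ht'' hj). rewrite hphi_g by lra. reflexivity. }
    assert (gb : forall j, d <= u0 j -> Rpower (v t0 j) beta <= E / 4).
    { intros j hj. pose proof (Hvbig t0 j ht'' hj). pose proof (HE4 t0 ht'').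
      assert (Rpower (v t0 j) beta <= Rpower (d / 4) beta) by (apply rp_mono_neg; lra).
      unfold E. lra. }
    assert (Hdl : dlap (fun j => Gb beta (u t0 j)) k0 =
                  - Rpower (u t0 (k0 - 1)%Z) beta + 2 * Rpower (u t0 k0) beta - Rpower (u t0 (k0 + 1)%Z) beta).
    { unfold dlap, Gb. ring. }
    destruct (Rle_dec d (u0 k0)) as [hk0|hk0].
    - exists (- (C' * (a * E)) - dlap (fun j => Gb beta (u t0 j)) k0). split.
      { apply is_derive_Rminus. apply Hvd_big; auto; lra. apply Hud; lra. }
      rewrite Hdl.
      assert (Hn : forall j, Rpower (v t0 k0) beta - Rpower (v t0 j) beta >= - (E * (Lr * Lr))).
      { intros j. destruct (Rle_dec d (u0 j)) as [hj|hj].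
        - assert (Hvv : v t0 j = v t0 k0).
          { unfold v. destruct (Rle_dec d (u0 j)); [|tauto]. destruct (Rle_dec d (u0 k0)); [|tauto]. auto. }
          rewrite Hvv. assert (0 <= E * (Lr * Lr)) by nra. lra.
        - rewrite (gnb j hj). pose proof (Hpsi j). pose proof (rp_pos (v t0 k0) beta). nra. }
      pose proof (Hn (k0 - 1)%Z). pose proof (Hn (k0 + 1)%Z).
      assert (C' * (a * E) = 2 * (Lr * Lr) * E) by (rewrite <- hCa; ring).
      lra.
    - exists (phi k0 * (a * E) - dlap (fun j => Gb beta (u t0 j)) k0). split.
      { apply is_derive_Rminus. apply Hvd_sm; auto; lra. apply Hud; lra. }
      rewrite Hdl.
      pose (P := INR (p k0)). pose (Q := INR (q k0)).
      assert (Hk : Rpower (v t0 k0) beta = E * (P * Q)) by (rewrite gnb; auto).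
      assert (Hl : Rpower (v t0 (k0 - 1)%Z) beta <= E * ((P - 1) * (Q + 1) + 1 / 4)).
      { destruct (Rle_dec d (u0 (k0 - 1)%Z)) as [hj|hj].
        - pose proof (gb _ hj). unfold P. rewrite (Bp k0 hj). simpl. nra.
        - rewrite (gnb _ hj). unfold psi, P, Q.
          pose proof (Rp (k0 - 1)%Z hj) as R1. replace (k0 - 1 + 1)%Z with k0 in R1 by lia.
          pose proof (Rq k0 hk0) as R2. rewrite R1, R2, !S_INR. nra. }
      assert (Hr : Rpower (v t0 (k0 + 1)%Z) beta <= E * ((P + 1) * (Q - 1) + 1 / 4)).
      { destruct (Rle_dec d (u0 (k0 + 1)%Z)) as [hj|hj].
        - pose proof (gb _ hj). unfold Q. rewrite (Bq k0 hj). simpl. nra.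
        - rewrite (gnb _ hj). unfold psi, P, Q.
          pose proof (Rq (k0 + 1)%Z hj) as R1. replace (k0 + 1 - 1)%Z with k0 in R1 by lia.
          pose proof (Rp k0 hk0) as R2. rewrite R1, R2, !S_INR. nra. }
      pose proof (hphi k0).
      assert (0 < phi k0) by apply rp_pos. assert (phi k0 * a <= 1) by nra. assert (phi k0 * (a * E) <= E) by (rewrite <- Rmult_assoc; nra).
      assert (E * (P * Q) * 2 - E * ((P - 1) * (Q + 1) + 1 / 4) - E * ((P + 1) * (Q - 1) + 1 / 4) = E * (3/2)) by field.
      lra. }
  assert (Hcmp := comparison beta m Lam T0 A0 ut v hLam hT0 hA0 HG HB H0 HC HD).
  pose proof (Hcmp t k ht) as Hvu. rewrite Hut in Hvu by lra.
  assert (hta : Rpower t a <= Rpower T0 a) by (apply rp_mono_pos; lra).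
  pose proof (rp_pos t a).
  destruct (Rle_dec d (u0 k)) as [hk|hk].
  - pose proof (Hvbig t k ht hk).
    assert (c <= d / 4 / Rpower T0 a) by apply Rmin_r.
    pose proof (rp_pos T0 a).
    assert (c * Rpower t a <= d / 4 / Rpower T0 a * Rpower T0 a) by (apply Rmult_le_compat; lra).
    replace (d / 4 / Rpower T0 a * Rpower T0 a) with (d / 4) in H4 by (field; lra).
    lra.
  - rewrite (Hvsm t k ht hk) in Hvu. pose proof (hphi k).
    assert (c <= Rpower (Lr * Lr) (1 / beta)) by apply Rmin_l.
    assert (Rpower t a <= Rpower (t + tau) a) by (apply rp_mono_pos; lra).
    pose proof (rp_pos (Lr * Lr) (1/beta)). nra.
Qed.
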